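(* Let $p$ be a prime number and let $K$ be a commutative ring in which $p$ is invertible. For a finite group $P$, let $\mathsf{CF}_K(P)$ denote the $K$-module of central (class) functions $P\to K$. For finite $p$-groups $P,Q$, a finite $(Q,P)$-biset $U$ and $f\in\mathsf{CF}_K(P)$, define $\mathsf{CF}_K(U)(f):Q\to K$ by $$\forall s\in Q,\quad \mathsf{CF}_K(U)(f)(s)=\frac{1}{|P|}\sum_{\substack{u\in U,\ x\in P\\ su=ux}} f(x).$$ Then $\mathsf{CF}_K(U)(f)\in \mathsf{CF}_K(Q)$, and with these maps the correspondence $P\mapsto \mathsf{CF}_K(P)$ is a rational $p$-biset functor.
   Context: A $p$-biset functor $F$ assigns to each finite $p$-group $P$ an abelian group $F(P)$ and to each finite $(Q,P)$-biset $U$ (a set with commuting left $Q$-action and right $P$-action) a group homomorphism $F(U):F(P)\to F(Q)$, such that $F(U)$ depends only on the isomorphism class of $U$, $F(U\sqcup U')=F(U)+F(U')$, $F$ of the identity $(P,P)$-biset $P$ (left and right multiplication) is the identity, and $F(V)\circ F(U)=F(V\times_Q U)$ for a finite $(R,Q)$-biset $V$, where $V\times_QU$ is the quotient of $V\times U$ by $(vq,u)\sim(v,qu)$. For $N\trianglelefteq P$, ${\rm Def}^P_{P/N}$ and ${\rm Inf}^P_{P/N}$ are $F$ applied to the $(P/N,P)$-biset $P/N$ and the $(P,P/N)$-biset $P/N$ respectively, and for $H\le P$, ${\rm Res}^P_H$ is $F$ applied to the $(H,P)$-biset $P$. The faithful part $\partial F(P)$ is the intersection of the kernels of ${\rm Def}^P_{P/N}$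 over all nontrivial normal subgroups $N$ of $P$. Rationality of $p$-biset functors (in the sense of Bouc) is characterized as follows: $F$ is rational if and only if, for every finite $p$-group $P$: (i) if the center of $P$ is not cyclic then $\partial F(P)=\{0\}$; and (ii) whenever $E\trianglelefteq P$ is a normal elementary abelian subgroup of rank $2$ and $Z\le E$ is a central subgroup of $P$ of order $p$, the map ${\rm Res}^P_{C_P(E)}\oplus{\rm Def}^P_{P/Z}:F(P)\to F(C_P(E))\oplus F(P/Z)$ is injective. *)

(* Defs.v *)
From HB Require Import structures.
From mathcomp Require Import all_boot all_order all_algebra all_fingroup all_solvable.
Set Implicit Arguments. Unset Strict Implicit. Unset Printing Implicit Defensive.
Import GRing.Theory.
Local Open Scope group_scope.

(* A finite p-group P is represented by a finGroupType gT (P = [set: gT]). *)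
Record biset (qT pT : finGroupType) := Biset {
  bs_car : finType;
  bs_l : qT -> bs_car -> bs_car;
  bs_r : bs_car -> pT -> bs_car }.
Arguments bs_car {qT pT}.
Arguments bs_l {qT pT}.
Arguments bs_r {qT pT}.

Definition is_biset (qT pT : finGroupType) (U : biset qT pT) : Prop :=
  [/\ (forall u, bs_l U 1 u = u),
      (forall a b u, bs_l U (a * b) u = bs_l U a (bs_l U b u)),
      (forall u, bs_r U u 1 = u),
      (forall u x y, bs_r U u (x * y) = bs_r U (bs_r U u x) y) &
      (forall a u x, bs_l U a (bs_r U u x) = bs_r U (bs_l U a u) x)].

Definition biset_iso (qT pT : finGroupType) (U U' : biset qT pT)
  (phi : bs_car U -> bs_car U') : Prop :=
  [/\ bijective phi,
      (forall a u, phi (bs_l U a u) = bs_l U' a (phi u)) &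
      (forall u x, phi (bs_r U u x) = bs_r U' (phi u) x)].

Definition biset_sum (qT pT : finGroupType) (U U' : biset qT pT) : biset qT pT :=
  @Biset qT pT (bs_car U + bs_car U')%type
    (fun a w => match w with inl u => inl (bs_l U a u) | inr u => inr (bs_l U' a u) end)
    (fun w x => match w with inl u => inl (bs_r U u x) | inr u => inr (bs_r U' u x) end).

Definition id_biset (pT : finGroupType) : biset pT pT :=
  @Biset pT pT pT (fun a x => a * x) (fun x b => x * b).

Definition res_biset (gT : finGroupType) (H : {group gT}) : biset (subg_of H) gT :=
  @Biset (subg_of H) gT gT (fun h x => sgval h * x) (fun x b => x * b).

Definition def_biset (gT : finGroupType) (N : {group gT}) : biset (coset_of N) gT :=
  @Biset (coset_of N) gT (coset_of N) (fun A B => A * B) (fun B x => B * coset N x).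

(* V x_Q U : quotient of V * U by (v q, u) ~ (v, q u); elements are the classes *)
Section Tensor.
Variables (rT qT pT : finGroupType) (V : biset rT qT) (U : biset qT pT).
Definition tens_pair : finType := (bs_car V * bs_car U)%type.
Definition tens_cls (w : tens_pair) : {set tens_pair} :=
  [set (bs_r V w.1 q, bs_l U q^-1 w.2) | q : qT].
Definition tens_classes : {set {set tens_pair}} := tens_cls @: setT.
Definition tens_car : finType := {A : {set tens_pair} | A \in tens_classes}.
Lemma tens_cls_in (w : tens_pair) : tens_cls w \in tens_classes.
Proof. by apply: imset_f; rewrite inE. Qed.
Definition tens_mk (w : tens_pair) : tens_car := exist _ (tens_cls w) (tens_cls_in w).
Definition tens_l (r : rT) (A : tens_car) : tens_car :=
  match [pick w in sval A] with
  | Some w => tens_mk (bs_l V r w.1, w.2)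
  | None => A end.
Definition tens_r (A : tens_car) (x : pT) : tens_car :=
  match [pick w in sval A] with
  | Some w => tens_mk (w.1, bs_r U w.2 x)
  | None => A end.
Definition tensor_biset : biset rT pT := @Biset rT pT tens_car tens_l tens_r.
End Tensor.

Definition is_cf (K : Type) (gT : finGroupType) (f : gT -> K) : Prop :=
  forall x y : gT, f (x ^ y) = f x.

(* CF_K(U)(f)(s) = 1/|P| * sum_{u in U, x in P, s u = u x} f(x);
   with pinv = p^-1 in K and |P| = p ^ (logn p |P|), 1/|P| = pinv ^+ logn p |P|. *)
Definition CF_act (K : comPzRingType) (p : nat) (pinv : K) (qT pT : finGroupType)
  (U : biset qT pT) (f : pT -> K) : qT -> K :=
  fun s => (pinv ^+ logn p #|[set: pT]| *
     \sum_(u : bs_car U) \sum_(x : pT | bs_l U s u == bs_r U u x) f x)%R.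

(* Main.v *)
Require Import Defs.
From HB Require Import structures.
From mathcomp Require Import all_boot all_order all_algebra all_fingroup all_solvable.
Import GRing.Theory.
Set Implicit Arguments. Unset Strict Implicit.
Local Open Scope group_scope.

Section Tens.
Variables (rT qT pT : finGroupType) (V : biset rT qT) (U : biset qT pT).
Hypotheses (bV : is_biset V) (bU : is_biset U).

Definition act (w : tens_pair V U) (q : qT) : tens_pair V U :=
  (bs_r V w.1 q, bs_l U q^-1 w.2).

Lemma act1 w : act w 1 = w.
Proof. by case: bV bU => _ _ r1 _ _ [l1 _ _ _ _]; case: w => v u; rewrite /act /= invg1 r1 l1. Qed.

Lemma actM w a b : act (act w a) b = act w (a * b).
Proof.
case: bV bU => _ _ _ rM _ [_ lM _ _ _]; case: w => v u.
by rewrite /act /= rM -lM invMg.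
Qed.

Lemma cls_act (w : tens_pair V U) q : tens_cls (act w q) = tens_cls w.
Proof.
apply/setP => y; apply/imsetP/imsetP => [[g _ ->]|[g _ ->]].
  by exists (q * g) => //; exact: actM.
exists (q^-1 * g) => //; have := actM w q (q^-1 * g); rewrite mulKVg => h.
exact: (esym h).
Qed.

Lemma mem_cls (w y : tens_pair V U) : (y \in tens_cls w) = (tens_cls y == tens_cls w).
Proof.
apply/idP/eqP => [/imsetP[q _ ->]|<-]; first exact: cls_act.
by apply/imsetP; exists 1 => //; exact: (esym (act1 y)).
Qed.

Lemma in_A (A : tens_car V U) (w : tens_pair V U) : w \in sval A -> sval A = tens_cls w.
Proof.
case: A => S /= /imsetP[w0 _ ->] wS.
by apply/eqP; rewrite eq_sym -mem_cls.
Qed.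

Lemma A_ne (A : tens_car V U) : exists w, w \in sval A.
Proof.
case: A => S /= /imsetP[w0 _ ->]; exists w0; by rewrite mem_cls.
Qed.

Lemma tl_eq (A : tens_car V U) (w : tens_pair V U) r :
  w \in sval A -> tens_l r A = tens_mk (V:=V) (U:=U) (bs_l V r w.1, w.2).
Proof.
move=> wA; rewrite /tens_l; case: pickP => [w' w'A|none]; last first.
  by move: (none w); rewrite wA.
apply: val_inj => /=.
have := w'A; rewrite (in_A wA) => /imsetP[q _ ->] /=.
case: bV => _ _ _ _ lr.
have -> : (bs_l V r (bs_r V w.1 q), bs_l U q^-1 w.2) = act (bs_l V r w.1, w.2) q.
  by rewrite /act /= lr.
exact: cls_act.
Qed.

Lemma tr_eq (A : tens_car V U) (w : tens_pair V U) x :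
  w \in sval A -> tens_r A x = tens_mk (V:=V) (U:=U) (w.1, bs_r U w.2 x).
Proof.
move=> wA; rewrite /tens_r; case: pickP => [w' w'A|none]; last first.
  by move: (none w); rewrite wA.
apply: val_inj => /=.
have := w'A; rewrite (in_A wA) => /imsetP[q _ ->] /=.
case: bU => _ _ _ _ lr.
have -> : (bs_r V w.1 q, bs_r U (bs_l U q^-1 w.2) x) = act (w.1, bs_r U w.2 x) q.
  by rewrite /act /= lr.
exact: cls_act.
Qed.

Definition Stab (w : tens_pair V U) := [set q : qT | act w q == w].

Lemma card_shift (S H : {pred qT}) (t : qT -> qT) :
  injective t -> (forall q, (q \in S) = (t q \in H)) -> #|S| = #|H|.
Proof.
move=> tinj hS; rewrite -[RHS](cardsE H) -(card_preimset [set x in H] tinj).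
by apply: eq_card => q; rewrite !inE hS.
Qed.

Lemma orbit_stab (w : tens_pair V U) :
  (#|tens_cls w| * #|Stab w|)%N = #|[set: qT]|.
Proof.
rewrite -[RHS]sum1_card (partition_big (act w) (mem (tens_cls w))) /=; last first.
  by move=> q _; apply/imsetP; exists q.
rewrite -sum_nat_const; apply: eq_bigr => y /imsetP[q0 _ ->].
rewrite sum1_card; symmetry; apply: (card_shift (mulIg q0^-1)) => q.
change ((q \in [set: qT]) && (act w q == act w q0) = (q * q0^-1 \in Stab w)); rewrite in_setT inE /=.
apply/eqP/eqP => [E|E].
  by rewrite -actM E actM mulgV act1.
by rewrite -[in RHS]E actM mulgKV.
Qed.

Lemma blc (qT' pT' : finGroupType) (W : biset qT' pT') : is_biset W ->
  forall a, cancel (bs_l W a) (bs_l W a^-1).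
Proof. by case=> l1 lM _ _ _ a u; rewrite -lM mulVg l1. Qed.

Lemma blK (qT' pT' : finGroupType) (W : biset qT' pT') : is_biset W ->
  forall a, cancel (bs_l W a^-1) (bs_l W a).
Proof. by case=> l1 lM _ _ _ a u; rewrite -lM mulgV l1. Qed.

Lemma brc (qT' pT' : finGroupType) (W : biset qT' pT') : is_biset W ->
  forall a, cancel (bs_r W ^~ a) (bs_r W ^~ a^-1).
Proof. by case=> _ _ r1 rM _ a u /=; rewrite -rM mulgV r1. Qed.

Lemma cnt_lemma (w : tens_pair V U) r x :
  #|[set q : qT | (bs_l V r w.1 == bs_r V w.1 q) && (bs_l U q w.2 == bs_r U w.2 x)]| =
  if tens_cls (bs_l V r w.1, w.2) == tens_cls (w.1, bs_r U w.2 x) then #|Stab w| else 0%N.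
Proof.
case: w => v u /=.
case: ifP => [/eqP E|nE].
  have: (bs_l V r v, u) \in tens_cls (v, bs_r U u x) by rewrite mem_cls E.
  case/imsetP => q1 _ /eqP; rewrite xpair_eqE /= => /andP[/eqP h1 /eqP h2].
  have h2' : bs_l U q1 u = bs_r U u x by rewrite {1}h2 (blK bU).
  apply: (card_shift (mulgI q1^-1)) => q.
  rewrite !inE /act /= xpair_eqE; congr (_ && _).
    case: (bV) => _ _ _ rM lr; rewrite rM -[in RHS](inj_eq (can_inj (blc bV r))).
    by rewrite !lr h1 (brc bV) eq_sym.
  rewrite invMg invgK; case: (bU) => _ lM _ _ _; rewrite lM h2'.
  by rewrite -[in RHS](inj_eq (can_inj (blc bU q))) (blK bU) eq_sym.
apply/eqP; rewrite cards_eq0; apply/eqP/setP => q; rewrite !inE.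
apply/negbTE/negP => /andP[/eqP h1 /eqP h2].
move/negbT: nE; rewrite h1 -h2 => /eqP; apply.
by rewrite -(cls_act (v, bs_l U q u) q) /act /= (blc bU).
Qed.

Lemma sum_stab (A : tens_car V U) :
  (\sum_(w in sval A) #|Stab w|)%N = #|[set: qT]|.
Proof.
have hA : forall w, w \in sval A -> #|Stab w| = (#|[set: qT]| %/ #|sval A|)%N.
  move=> w wA; rewrite (in_A wA) -(orbit_stab w) mulKn //.
  by apply/card_gt0P; exists w; rewrite mem_cls.
rewrite (eq_bigr _ hA) sum_nat_const mulnC divnK //.
by have [w wA] := A_ne A; rewrite (in_A wA) -(orbit_stab w) dvdn_mulr.
Qed.

End Tens.

Section Comp.
Variables (p : nat) (K : comPzRingType) (pinv : K).
Variables (rT qT pT : finGroupType) (V : biset rT qT) (U : biset qT pT).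
Hypotheses (bV : is_biset V) (bU : is_biset U).

Lemma sum_cond_const (I : finType) (P : pred I) (a : K) :
  (\sum_(i | P i) a = a *+ #|[set i | P i]|)%R.
Proof. by rewrite sumr_const cardsE. Qed.

Lemma mk_eq (a b : tens_pair V U) :
  (tens_mk (V:=V) (U:=U) a == tens_mk b) = (tens_cls a == tens_cls b).
Proof. by rewrite -val_eqE. Qed.

Lemma X_eq (f : pT -> K) (r : rT) :
  (\sum_(v : bs_car V) \sum_(q | bs_l V r v == bs_r V v q)
     \sum_(u : bs_car U) \sum_(x | bs_l U q u == bs_r U u x) f x =
   \sum_(w : (bs_car V * bs_car U)%type) \sum_(x : pT) f x *+
      #|[set q : qT | (bs_l V r w.1 == bs_r V w.1 q) && (bs_l U q w.2 == bs_r U w.2 x)]|)%R.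
Proof.
rewrite -(pair_bigA _ (fun v u => \sum_(x : pT) f x *+
      #|[set q : qT | (bs_l V r v == bs_r V v q) && (bs_l U q u == bs_r U u x)]|))%R /=.
apply: eq_bigr => v _.
rewrite exchange_big /=; apply: eq_bigr => u _.
under eq_bigr do rewrite big_mkcond.
rewrite exchange_big /=; apply: eq_bigr => x _.
by rewrite -big_mkcondr sum_cond_const.
Qed.

Lemma inA_mk (A : tens_car V U) (w : tens_pair V U) :
  (tens_mk (V:=V) (U:=U) w == A) = (w \in sval A).
Proof.
apply/eqP/idP => [<-|wA] /=; first by rewrite (mem_cls bV bU).
by apply: val_inj; rewrite /= -(in_A bV bU wA).
Qed.

Lemma Y_eq (f : pT -> K) (r : rT) :
  (\sum_(w : (bs_car V * bs_car U)%type) \sum_(x : pT) f x *+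
      #|[set q : qT | (bs_l V r w.1 == bs_r V w.1 q) && (bs_l U q w.2 == bs_r U w.2 x)]|
   = (\sum_(A : tens_car V U) \sum_(x | tens_l r A == tens_r A x) f x) *+ #|[set: qT]|)%R.
Proof.
rewrite (partition_big (tens_mk (V:=V) (U:=U)) xpredT) // -sumrMnl.
apply: eq_bigr => A _.
rewrite exchange_big /= (big_mkcond (fun x => tens_l r A == tens_r A x)) -sumrMnl.
apply: eq_bigr => x _.
rewrite sumrMnr.
have [w0 w0A] := A_ne bV bU A.
rewrite (tl_eq bV bU r w0A) (tr_eq bV bU x w0A) mk_eq.
transitivity (f x *+ \sum_(w in sval A)
   (if tens_cls (V:=V) (U:=U) (bs_l V r w.1, w.2) == tens_cls (w.1, bs_r U w.2 x)
    then #|Stab w| else 0%N))%R.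
  congr (_ *+ _)%R; apply: eq_big => [w|w]; first by rewrite inA_mk.
  by move=> _; rewrite (cnt_lemma bV bU).
have hc : forall w, w \in sval A ->
   (tens_cls (V:=V) (U:=U) (bs_l V r w.1, w.2) == tens_cls (w.1, bs_r U w.2 x)) =
   (tens_cls (V:=V) (U:=U) (bs_l V r w0.1, w0.2) == tens_cls (w0.1, bs_r U w0.2 x)).
  move=> w wA; rewrite -!mk_eq -(tl_eq bV bU r wA) -(tr_eq bV bU x wA).
  by rewrite (tl_eq bV bU r w0A) (tr_eq bV bU x w0A).
rewrite (eq_bigr (fun w => if tens_cls (V:=V) (U:=U) (bs_l V r w0.1, w0.2) ==
     tens_cls (w0.1, bs_r U w0.2 x) then #|Stab w| else 0%N)); last first.
  by move=> w wA; rewrite hc.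
case: ifP => _; first by rewrite (sum_stab bV bU).
by rewrite big1 // mul0rn.
Qed.

Hypothesis pinvP : (pinv * p%:R = 1)%R.

Lemma part6 (f : pT -> K) : p.-group [set: qT] ->
  CF_act p pinv V (CF_act p pinv U f) =1 CF_act p pinv (tensor_biset V U) f.
Proof.
move=> pgQ r; rewrite /CF_act /=.
under eq_bigr do rewrite -mulr_sumr.
have hQ : (pinv ^+ logn p #|[set: qT]| * #|[set: qT]|%:R = 1)%R.
  by rewrite {2}(card_pgroup pgQ) natrX -exprMn pinvP expr1n.
rewrite -mulr_sumr X_eq Y_eq -mulr_natl mulrCA [X in (_ * X)%R]mulrA hQ.
by rewrite mul1r.
Qed.

End Comp.
Section S.
Variables (p : nat) (K : comPzRingType) (pinv : K).
Hypothesis pinvP : (pinv * p%:R = 1)%R.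

Lemma pinvX (gT : finGroupType) : p.-group [set: gT] ->
  (pinv ^+ logn p #|[set: gT]| * #|[set: gT]|%:R = 1)%R.
Proof.
move=> pg; rewrite {2}(card_pgroup pg) natrX -exprMn pinvP; exact: expr1n.
Qed.

Lemma def_sum (gT : finGroupType) (N : {group gT}) (y : gT) (f : gT -> K) :
  N <| [set: gT] -> is_cf f -> p.-group [set: gT] ->
  (CF_act p pinv (def_biset N) f (coset N y) * #|N|%:R = \sum_(x in N :* y) f x)%R.
Proof.
move=> nNG cf pg.
have nN : forall z, z \in 'N(N) := fun z => subsetP (normal_norm nNG) z (in_setT z).
set S := (\sum_(x in N :* y) f x)%R.
have inner : forall u : coset_of N,
   (\sum_(x | (coset N y * u == u * coset N x)%g) f x = S)%R.
  move=> u; rewrite -(coset_reprK u); set g := repr u.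
  rewrite (reindex_inj (@conjg_inj _ g)); apply: eq_big => x /=; last by rewrite cf.
  have ->: coset N g * coset N (x ^ g) = coset N x * coset N g.
    by rewrite -!morphM ?nN // -conjgC.
  rewrite (inj_eq (mulIg _)) eq_sym.
  by apply/eqP/rcoset_kercosetP; rewrite ?nN.
rewrite /CF_act (eq_bigr (fun _ => S) (fun u _ => inner u)) sumr_const.
have cardQ : (#|[set: coset_of N]| * #|N| = #|[set: gT]|)%N.
  by rewrite -quotientT card_quotient ?normal_norm // mulnC Lagrange ?subsetT.
rewrite -[X in (_ *+ X)%R](cardsT (coset_of N)).
rewrite -(mulr_natl S) (mulrC _ (#|N|%:R)%R) mulrCA [(#|N|%:R * _)%R]mulrA -natrM mulnC cardQ mulrA pinvX //.
by rewrite mul1r.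
Qed.

Lemma bl_can (qT pT : finGroupType) (U : biset qT pT) : is_biset U ->
  forall a, cancel (bs_l U a) (bs_l U a^-1).
Proof. by case=> l1 lM _ _ _ a u; rewrite -lM mulVg l1. Qed.

Lemma br_can (qT pT : finGroupType) (U : biset qT pT) : is_biset U ->
  forall a, cancel (bs_r U ^~ a) (bs_r U ^~ a^-1).
Proof. by case=> _ _ r1 rM _ a u /=; rewrite -rM mulgV r1. Qed.

Lemma part1 (qT pT : finGroupType) (U : biset qT pT) (f : pT -> K) :
  is_biset U -> is_cf (CF_act p pinv U f).
Proof.
move=> bU s y; rewrite /CF_act; congr (_ * _)%R.
have inj := can_inj (bl_can bU y).
rewrite [RHS](reindex_inj inj); apply: eq_bigr => u _; apply: eq_bigl => x.
case: (bU) => l1 lM r1 rM lr.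
rewrite conjgE lM -lr -[in RHS]lM.
by rewrite -[in RHS](inj_eq (can_inj (bl_can bU y^-1))) bl_can.
Qed.

Lemma part2 (qT pT : finGroupType) (U : biset qT pT) (f g : pT -> K) :
  CF_act p pinv U (fun x => f x + g x)%R =1
  (fun s => CF_act p pinv U f s + CF_act p pinv U g s)%R.
Proof.
move=> s; rewrite /CF_act -mulrDr -big_split /=; congr (_ * _)%R.
by apply: eq_bigr => u _; rewrite big_split.
Qed.

Lemma part3 (qT pT : finGroupType) (U U' : biset qT pT) (phi : bs_car U -> bs_car U')
  (f : pT -> K) : biset_iso phi -> CF_act p pinv U f =1 CF_act p pinv U' f.
Proof.
case=> bij hl hr s; rewrite /CF_act; congr (_ * _)%R.
rewrite (reindex phi); last by apply: onW_bij.
apply: eq_bigr => u _; apply: eq_bigl => x.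
by rewrite -hl -hr (inj_eq (bij_inj bij)).
Qed.

Lemma part4 (qT pT : finGroupType) (U U' : biset qT pT) (f : pT -> K) :
  CF_act p pinv (biset_sum U U') f =1
  (fun s => CF_act p pinv U f s + CF_act p pinv U' f s)%R.
Proof.
move=> s; rewrite /CF_act -mulrDr; congr (_ * _)%R.
by rewrite big_sumType.
Qed.


Lemma sum_conj_id (gT : finGroupType) (f : gT -> K) (a : gT) :
  is_cf f ->
  (\sum_(u : gT) \sum_(x : gT | (a * u == u * x)%g) f x = f a *+ #|[set: gT]|)%R.
Proof.
move=> cf; rewrite cardsT -sumr_const.
apply: eq_bigr => u _.
rewrite (big_pred1 (a ^ u)) ?cf // => x /=.
apply/eqP/eqP => [E|->]; first by rewrite conjgE E mulKg.
by rewrite conjgE mulKVg.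
Qed.

Lemma part5 (pT : finGroupType) (f : pT -> K) :
  p.-group [set: pT] -> is_cf f -> CF_act p pinv (id_biset pT) f =1 f.
Proof.
by move=> pg cf s; rewrite /CF_act /= sum_conj_id // -mulr_natl mulrA pinvX // mul1r.
Qed.

Lemma res_val (gT : finGroupType) (H : {group gT}) (f : gT -> K) s :
  p.-group [set: gT] -> is_cf f -> CF_act p pinv (res_biset H) f s = f (sgval s).
Proof.
by move=> pg cf; rewrite /CF_act /= sum_conj_id // -mulr_natl mulrA pinvX // mul1r.
Qed.

Lemma sum_rcoset (gT : finGroupType) (N : {set gT}) y (F : gT -> K) :
  (\sum_(x in N :* y) F x = \sum_(z in N) F (z * y)%g)%R.
Proof.
have ->: N :* y = [set z * y | z in N].
  apply/setP => x; rewrite mem_rcoset; apply/idP/imsetP => [xN|[z zN ->]].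
    by exists (x * y^-1); rewrite // mulgKV.
  by rewrite mulgK.
by rewrite big_imset //= => a b _ _; apply: mulIg.
Qed.

Lemma sum_cycle (gT : finGroupType) (c : gT) (F : gT -> K) :
  (\sum_(z in <[c]>) F z = \sum_(k < #[c]) F (c ^+ k)%g)%R.
Proof.
have ->: <[c]> = [set c ^+ (val k) | k : 'I_#[c]].
  apply/setP => z; apply/idP/imsetP => [/cyclePmin[i lt_i ->]|[k _ ->]].
    by exists (Ordinal lt_i).
  by rewrite mem_cycle.
rewrite big_imset //= => i j _ _ /eqP; rewrite eq_expg_mod_order !modn_small //.
by move/eqP; apply: val_inj.
Qed.


Lemma cZ (gT : finGroupType) (z y : gT) : z \in 'Z([set: gT]) -> commute z y.
Proof. by case/setIP => _ /centP cz; exact: (cz y (in_setT y)). Qed.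

Lemma part7 (gT : finGroupType) (f : gT -> K) :
  prime p ->
  p.-group [set: gT] -> ~~ cyclic 'Z([set: gT]) -> is_cf f ->
  (forall N : {group gT}, N <| [set: gT] -> N :!=: 1%g ->
     CF_act p pinv (def_biset N) f =1 (fun _ => 0%R)) ->
  f =1 (fun _ => 0%R).
Proof.
move=> pr pg ncyc cf hN x.
have S0 : forall c y, c \in 'Z([set: gT]) -> c != 1 ->
    (\sum_(0 <= k < #[c]) f (c ^+ k * y)%g = 0)%R.
  move=> c y cZc c1.
  have nN : <[c]>%G <| [set: gT] by apply: sub_center_normal; rewrite cycle_subG.
  have := def_sum y nN cf pg.
  rewrite (hN _ nN) ?cycle_eq1 // mul0r sum_rcoset.
  by move=> E0; rewrite sum_cycle in E0; rewrite big_mkord -E0.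
have pZ : p.-group 'Z([set: gT]) := pgroupS (center_sub _) pg.
have: 1 < 'r_p('Z([set: gT])).
  by rewrite -(rank_pgroup pZ) ltnNge -abelian_rank1_cyclic ?center_abelian.
case/p_rank_geP => E /pnElemPcard[sEZ abE cardE].
have Ent : E :!=: 1.
  apply/eqP => E1; move: cardE; rewrite E1 cards1 => /eqP.
  by rewrite -[X in X == _](expn0 p) eqn_exp2l ?prime_gt1.
case/trivgPn: Ent => a aE a1.
have oa : #[a] = p by apply: (abelem_order_p abE).
have: ~~ (E \subset <[a]>).
  apply/negP => /subset_leq_card; rewrite -orderE oa cardE.
  by rewrite leqNgt -{1}(expn1 p) ltn_exp2l ?prime_gt1.
case/subsetPn => b bE bNa.
have EZ := subsetP sEZ.
pose c (i : nat) := a ^+ i * b.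
have cE i : c i \in E by rewrite groupM ?groupX.
have c1 i : c i != 1.
  apply: contra bNa => /eqP ci1; rewrite -(mulKg (a ^+ i) b) -/(c i) ci1 mulg1.
  by rewrite groupV mem_cycle.
have oc i : #[c i] = p by apply: (abelem_order_p abE).
have key : (\sum_(i < p) \sum_(k < p) f (c i ^+ k * x)%g = 0)%R.
  apply: big1 => i _.
  by rewrite -(big_mkord xpredT (fun k => f (c i ^+ k * x)%g)) -{1}(oc i) S0 ?EZ.
rewrite exchange_big /= in key.
have ordp : 0 < p by rewrite prime_gt0.
rewrite (bigD1 (Ordinal ordp)) //= [X in (_ + X)%R]big1 ?addr0 in key; last first.
  move=> k; rewrite -val_eqE /= => k0.
  have kp : 0 < k by rewrite lt0n.
  set m := nat_of_ord k.
  have m1 : a ^+ m != 1.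
    rewrite -order_dvdn oa; apply/negP => /(dvdn_leq kp).
    by rewrite leqNgt ltn_ord.
  have am : a ^+ m \in 'Z([set: gT]) by rewrite EZ ?groupX.
  have oam : #[a ^+ m] = p by apply: (abelem_order_p abE); rewrite ?groupX.
  rewrite -[RHS](S0 (a ^+ m) (b ^+ m * x) am m1) oam big_mkord.
  apply: eq_bigr => i _.
  rewrite /c expgMn; last by apply: commute_sym; apply: cZ; rewrite EZ.
  by rewrite -expgnA mulnC expgnA mulgA.
rewrite (eq_bigr (fun _ => f x)) in key; last by move=> i _; rewrite expg0 mul1g.
rewrite sumr_const card_ord -mulr_natl in key.
by rewrite -[f x]mul1r -pinvP -mulrA key mulr0.
Qed.


Lemma comm_in_Z (gT : finGroupType) (E Z : {group gT}) (x e : gT) :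
  prime p -> p.-group [set: gT] -> E <| [set: gT] -> #|E| = (p ^ 2)%N ->
  Z \subset E -> #|Z| = p -> Z <| [set: gT] -> e \in E -> [~ x, e] \in Z.
Proof.
move=> pr pg nE cardE sZE cardZ nZG eE.
have nZ : forall y, y \in 'N(Z) := fun y => subsetP (normal_norm nZG) y (in_setT y).
have pGb : p.-group ([set: gT] / Z) := quotient_pgroup _ pg.
have nilGb := pgroup_nil pGb.
have nEb : E / Z <| [set: gT] / Z := quotient_normal _ nE.
have cEb : #|E / Z| = p.
  rewrite card_quotient; last by apply/subsetP => y _; apply: nZ.
  by rewrite -divgS // cardE cardZ expnS expn1 mulKn ?prime_gt0.
have ntEb : E / Z != 1.
  apply/eqP => E1; move: cEb; rewrite E1 cards1 => p1.
  by move: (prime_gt1 pr); rewrite -p1.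
have sEbZ : E / Z \subset 'Z([set: gT] / Z).
  apply/negPn/negP => nsub; move: (meet_center_nil nilGb nEb ntEb).
  by rewrite prime_TIg ?cEb // eqxx.
have := subsetP sEbZ (coset Z e) (mem_quotient _ eE).
rewrite quotientT => ceZ.
apply: coset_idr (nZ _) _.
rewrite morphR ?nZ //; apply/eqP/commgP; apply: commute_sym; exact: cZ ceZ.
Qed.


Lemma part8 (gT : finGroupType) (E Z : {group gT}) (f g : gT -> K) :
  prime p -> p.-group [set: gT] ->
  E <| [set: gT] -> p.-abelem E -> logn p #|E| = 2 ->
  Z \subset E -> Z \subset 'Z([set: gT]) -> #|Z| = p ->
  is_cf f -> is_cf g ->
  CF_act p pinv (res_biset 'C(E)%G) f =1 CF_act p pinv (res_biset 'C(E)%G) g ->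
  CF_act p pinv (def_biset Z) f =1 CF_act p pinv (def_biset Z) g ->
  f =1 g.
Proof.
move=> pr pg nE abE dimE sZE sZZ cardZ cf cg hres hdef x.
case: (boolP (x \in 'C(E))) => xC.
  by have := hres (subg 'C(E)%G x); rewrite !res_val // subgK.
have cardE : #|E| = (p ^ 2)%N by rewrite -dimE -card_pgroup // abelem_pgroup.
have nZG : Z <| [set: gT] by apply: sub_center_normal.
case: (pickP (fun e => (e \in E) && ([~ x, e] != 1))) => [e /andP[eE z1]|none]; last first.
  case/negP: xC; apply/centP => e eE; apply/commgP.
  by move: (none e); rewrite eE /= => /negbFE.
set z := [~ x, e].
have zZ : z \in Z by exact: comm_in_Z pr pg nE cardE sZE cardZ nZG eE.
have zc : forall k, z ^+ k \in 'Z([set: gT]) by move=> k; rewrite (subsetP sZZ) ?groupX.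
have sZz : Z \subset <[z]>.
  have oz : #[z] = p.
    have := order_dvdG zZ; rewrite cardZ; case/primeP: pr => _ hp.
    case/hp/orP => /eqP // oz1.
    by case/negP: z1; rewrite -order_eq1 oz1.
  have: <[z]> :==: Z by rewrite eqEcard cycle_subG zZ -orderE oz cardZ leqnn.
  by move/eqP => ->.
have conjX : forall k, x ^ (e ^+ k) = x * z ^+ k.
  elim=> [|k IH]; first by rewrite expg0 conjg1 mulg1.
  rewrite expgSr conjgM IH conjMg {1}conjg_mulR -/z.
  have -> : (z ^+ k) ^ e = z ^+ k by rewrite conjgE (@cZ _ _ _ (zc k)) mulKg.
  by rewrite -mulgA -expgS.
have hconst : forall h : gT -> K, is_cf h -> forall n, n \in Z -> h (n * x) = h x.
  move=> h ch n nZ; have /cycleP[k ->] := subsetP sZz n nZ.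
  by rewrite (@cZ _ _ _ (zc k)) -conjX ch.
have hsum : forall h : gT -> K, is_cf h -> (\sum_(y in Z :* x) h y = h x *+ p)%R.
  move=> h ch; rewrite sum_rcoset (eq_bigr (fun _ => h x)) ?sumr_const ?cardZ //.
  exact: hconst.
have E0 := hdef (coset Z x).
have : (CF_act p pinv (def_biset Z) f (coset Z x) * #|Z|%:R =
        CF_act p pinv (def_biset Z) g (coset Z x) * #|Z|%:R)%R by rewrite E0.
rewrite (def_sum x nZG cf pg) (def_sum x nZG cg pg) !hsum // => hp.
by rewrite -[f x]mul1r -[g x]mul1r -pinvP -!mulrA !mulr_natl hp.
Qed.

End S.

Unset Implicit Arguments.
Set Strict Implicit.

Theorem proposition2p4 (p : nat) (K : comPzRingType) (pinv : K) :
  prime p -> (pinv * p%:R = 1)%R ->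
  let F := @CF_act K p pinv in
  (* CF_K(U)(f) is a central function on Q *)
  (forall (qT pT : finGroupType) (U : biset qT pT) (f : pT -> K),
     p.-group [set: qT] -> p.-group [set: pT] -> is_biset U ->
     is_cf f -> is_cf (F _ _ U f)) /\
  (* F(U) is a group homomorphism CF_K(P) -> CF_K(Q) *)
  (forall (qT pT : finGroupType) (U : biset qT pT) (f g : pT -> K),
     p.-group [set: qT] -> p.-group [set: pT] -> is_biset U ->
     is_cf f -> is_cf g ->
     F _ _ U (fun x => f x + g x)%R =1 (fun s => F _ _ U f s + F _ _ U g s)%R) /\
  (* F(U) depends only on the isomorphism class of U *)
  (forall (qT pT : finGroupType) (U U' : biset qT pT) (phi : bs_car U -> bs_car U')
          (f : pT -> K),
     p.-group [set: qT] -> p.-group [set: pT] -> is_biset U -> is_biset U' ->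
     biset_iso phi -> is_cf f -> F _ _ U f =1 F _ _ U' f) /\
  (* F(U ⊔ U') = F(U) + F(U') *)
  (forall (qT pT : finGroupType) (U U' : biset qT pT) (f : pT -> K),
     p.-group [set: qT] -> p.-group [set: pT] -> is_biset U -> is_biset U' ->
     is_cf f ->
     F _ _ (biset_sum U U') f =1 (fun s => F _ _ U f s + F _ _ U' f s)%R) /\
  (* F(identity biset) = id *)
  (forall (pT : finGroupType) (f : pT -> K),
     p.-group [set: pT] -> is_cf f -> F _ _ (id_biset pT) f =1 f) /\
  (* F(V) o F(U) = F(V x_Q U) *)
  (forall (rT qT pT : finGroupType) (V : biset rT qT) (U : biset qT pT) (f : pT -> K),
     p.-group [set: rT] -> p.-group [set: qT] -> p.-group [set: pT] ->
     is_biset V -> is_biset U -> is_cf f ->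
     F _ _ V (F _ _ U f) =1 F _ _ (tensor_biset V U) f) /\
  (* rationality (i): non-cyclic center implies trivial faithful part *)
  (forall (gT : finGroupType) (f : gT -> K),
     p.-group [set: gT] -> ~~ cyclic 'Z([set: gT]) -> is_cf f ->
     (forall N : {group gT}, N <| [set: gT] -> N :!=: 1%g ->
        F _ _ (def_biset N) f =1 (fun _ => 0%R)) ->
     f =1 (fun _ => 0%R)) /\
  (* rationality (ii): Res^P_{C_P(E)} (+) Def^P_{P/Z} is injective *)
  (forall (gT : finGroupType) (E Z : {group gT}) (f g : gT -> K),
     p.-group [set: gT] ->
     E <| [set: gT] -> p.-abelem E -> logn p #|E| = 2 ->
     Z \subset E -> Z \subset 'Z([set: gT]) -> #|Z| = p ->
     is_cf f -> is_cf g ->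
     F _ _ (res_biset 'C(E)%G) f =1 F _ _ (res_biset 'C(E)%G) g ->
     F _ _ (def_biset Z) f =1 F _ _ (def_biset Z) g ->
     f =1 g).
Proof.
move=> pr pinvP; cbv zeta.
split; first by move=> qT pT U f h1 h2 bU h3; apply: part1.
split; first by move=> qT pT U f g h1 h2 h3 h4 h5; apply: part2.
split; first by move=> qT pT U U2 phi f h1 h2 h3 h4 iso h5; apply: (part3 p pinv f iso).
split; first by move=> qT pT U U2 f h1 h2 h3 h4 h5; apply: part4.
split; first by move=> pT f pg cf; apply: (part5 pinvP pg cf).
split; first by move=> rT qT pT V U f h1 pgQ h2 bV bU h3; apply: (part6 bV bU pinvP).
split; first by move=> gT f pg nc cf hN; apply: (part7 pinvP pr pg nc cf hN).
move=> gT E Z f g pg nE abE dimE sZE sZZ cZ cf cg hr hd.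
exact: (part8 pinvP pr pg nE abE dimE sZE sZZ cZ cf cg hr hd).
Qed.
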